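(* Let $S^{\circ}_{n'}$ be the parabolic subgroup of $D_n$ generated by $s_{1'},s_2,\dots,s_{n-1}$. Let $\pi\in S^{\circ}_{n'}$ and suppose $\Phi(\pi)=t_{k_1}^{i_{k_1}}\cdots t_{k_m}^{i_{k_m}}$ (standard OGS canonical form in $S_n$, $m\ge1$, $2\le k_1<\dots<k_m$, $i_{k_j}\ge1$) is a standard OGS elementary element, i.e. $\operatorname{maj}(\Phi(\pi))=\sum_{j=1}^m i_{k_j}\le k_1$. Let $\pi^{\circ}=t_{k_1}^{i_{k_1}}\cdots t_{k_m}^{i_{k_m}}\in D_n$. Then: (1) if $\sum_{j=1}^m i_{k_j}=k_1$, then $\pi=\pi^\circ$; (2) if $\sum_{j=1}^m i_{k_j}<k_1$, then $\pi=w_{\operatorname{maj}(\Phi(\pi))}\cdot\pi^\circ$.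
   Context: $D_n$ ($n\ge2$) is the Coxeter group with generators $s_{1'},s_1,\dots,s_{n-1}$ and relations $s^2=1$, $(s_i s_{i+1})^3=1$, $(s_is_j)^2=1$ for $|i-j|\ge 2$, $(s_{1'}s_2)^3=1$, $(s_{1'}s_i)^2=1$ for $i\ne 2$. In $D_n$: $t_k=s_1\cdots s_{k-1}$ ($2\le k\le n$), $w_k=s_k s_{k-1}\cdots s_2 s_1 s_{1'} s_2\cdots s_k$ ($1\le k\le n-1$). $\Phi:D_n\to S_n$ is the homomorphism $s_{1'}\mapsto s_1$, $s_i\mapsto s_i$, with $S_n$ generated by $s_i=(i,i+1)$ and $t_k=s_1\cdots s_{k-1}$ in $S_n$; every element of $S_n$ has a unique standard OGS canonical form $t_2^{i_2}\cdots t_n^{i_n}$, $0\le i_k<k$. *)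

(* Defs.v *)
From mathcomp Require Import all_boot all_fingroup.
Set Implicit Arguments. Unset Strict Implicit. Unset Printing Implicit Defensive.
Local Open Scope group_scope.

(* Model: D_n realized as the group of even signed permutations of {1..n},
   i.e. permutations of 'I_n * bool (position, sign) commuting with sign flip.
   Position j : 'I_n stands for the letter j+1. *)

Definition sD (n i : nat) : {perm ('I_n * bool)} :=
  match n as m return {perm ('I_m * bool)} with
  | 0 => 1
  | m.+1 => tperm (inord i.-1, false) (inord i, false)
           * tperm (inord i.-1, true) (inord i, true)
  end.

(* s_{1'} in D_n: swap letters 1 and 2 and change both signs. *)
Definition s1'D (n : nat) : {perm ('I_n * bool)} :=
  match n as m return {perm ('I_m * bool)} with
  | 0 => 1
  | m.+1 => tperm (inord 0, false) (inord 1, true)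
           * tperm (inord 0, true) (inord 1, false)
  end.

Definition sS (n i : nat) : {perm 'I_n} :=
  match n as m return {perm 'I_m} with
  | 0 => 1
  | m.+1 => tperm (inord i.-1) (inord i)
  end.

Definition tD (n k : nat) : {perm ('I_n * bool)} := \prod_(1 <= i < k) sD n i.
Definition tS (n k : nat) : {perm 'I_n} := \prod_(1 <= i < k) sS n i.

Definition wD (n k : nat) : {perm ('I_n * bool)} :=
  (\prod_(0 <= j < k) sD n (k - j)) * s1'D n * \prod_(2 <= i < k.+1) sD n i.

(* Phi : D_n -> S_n, forgetting signs (sends s_{1'} to s_1, s_i to s_i). *)
Definition PhiD (n : nat) (g : {perm ('I_n * bool)}) : {perm 'I_n} :=
  insubd (1 : {perm 'I_n}) [ffun x : 'I_n => (g (x, false)).1].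

Definition Dn (n : nat) : {set {perm ('I_n * bool)}} :=
  << s1'D n |: [set sD n i | i : 'I_n & 1 <= i] >>.
Definition Sparab (n : nat) : {set {perm ('I_n * bool)}} :=
  << s1'D n |: [set sD n i | i : 'I_n & 2 <= i] >>.

(* Main.v *)
Require Import Defs.
From mathcomp Require Import all_boot all_fingroup.
From mathcomp Require Import zify.
Set Implicit Arguments. Unset Strict Implicit.
Local Open Scope group_scope.

Lemma tpE (T : finType) (x y z : T) :
  tperm x y z = if z == x then y else if z == y then x else z.
Proof. by rewrite /tperm permE. Qed.

Lemma sS_val n i (x : 'I_n) : 1 <= i < n ->
  (sS n i x : nat) = if x == i.-1 :> nat then i else if x == i :> nat then i.-1 else x.
Proof.
case: n x => [|n] x; first by case: x.
move=> /andP[h1 h2]; rewrite /sS tpE.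
have e1 : nat_of_ord (inord i.-1 : 'I_n.+1) = i.-1 by rewrite inordK //; lia.
have e2 : nat_of_ord (inord i : 'I_n.+1) = i by rewrite inordK.
rewrite -!(inj_eq val_inj) /= e1 e2.
by case: ifP => [/eqP|_]; [|case: ifP => [/eqP|]].
Qed.

Lemma prod_sS n a b (x : 'I_n) : 1 <= a <= b -> b <= n ->
  ((\prod_(a <= i < b) sS n i)%g x : nat) =
  if x == a.-1 :> nat then b.-1 else if a <= x < b then x.-1 else x.
Proof.
move=> /andP[ha hab]; elim: b hab x => [|b IH] hab x hb.
  lia.
case: (leqP a b) => hab'.
  rewrite big_nat_recr //= permM sS_val; last lia.
  rewrite IH //; last lia.
  by have := ltn_ord x; repeat case: ifP; lia.
have -> : b.+1 = a by lia.
rewrite big_geq //= perm1; repeat case: ifP; lia.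
Qed.

Lemma tS_val n k (x : 'I_n) : 1 <= k <= n ->
  (tS n k x : nat) = if x == 0%N :> nat then k.-1 else if x < k then x.-1 else x.
Proof.
move=> /andP[h1 h2]; rewrite /tS prod_sS; [|lia|lia].
by repeat case: ifP; lia.
Qed.

Lemma tS_shift n k e (x : 'I_n) : 1 <= k <= n -> e <= x < k ->
  ((tS n k ^+ e) x : nat) = x - e.
Proof.
move=> hk; elim: e => [|e IH] he; first by rewrite expg0 perm1 subn0.
rewrite expgSr permM tS_val // IH; last lia.
by repeat case: ifP; lia.
Qed.

Lemma tS_zero n k e (x : 'I_n) : 1 <= k <= n -> 1 <= e <= k -> x = 0 :> nat ->
  ((tS n k ^+ e) x : nat) = k - e.
Proof.
move=> hk; elim: e => [|e IH] he hx; first lia.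
rewrite expgSr permM tS_val //.
case: e IH he => [|e] IH he.
  by rewrite expg0 perm1 hx /=; lia.
rewrite IH //; last lia.
by repeat case: ifP; lia.
Qed.

Ltac ifs := repeat (match goal with |- context [if ?c then _ else _] =>
  lazymatch c with context [if _ then _ else _] => fail | _ => case: (boolP c) => ? end end; rewrite /=).

Definition Rel n (g : {perm ('I_n * bool)}) (s : {perm 'I_n}) (c : 'I_n -> bool) :=
  forall x b, g (x, b) = (s x, b (+) c x).

Lemma Rel_mul n g h s t c d : @Rel n g s c -> Rel h t d ->
  Rel (g * h) (s * t) (fun x => c x (+) d (s x)).
Proof. by move=> Hg Hh x b; rewrite !permM Hg Hh addbA. Qed.

Lemma Rel_ext n g s s' c c' : @Rel n g s c -> s = s' -> c =1 c' -> Rel g s' c'.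
Proof. by move=> H <- E x b; rewrite H E. Qed.

Lemma Rel1 n : @Rel n 1 1 (fun _ => false).
Proof. by move=> x b; rewrite !perm1 addbF. Qed.

Lemma Rel_prod0 n (I : Type) (r : seq I) (P : pred I) F1 F2 :
  (forall i, P i -> @Rel n (F1 i) (F2 i) (fun _ => false)) ->
  Rel (\prod_(i <- r | P i) F1 i) (\prod_(i <- r | P i) F2 i) (fun _ => false).
Proof.
move=> H; apply: (big_ind2 (fun g s => Rel g s (fun _ => false))) => //.
  exact: Rel1.
move=> g s g' s' H1 H2; apply: Rel_ext (Rel_mul H1 H2) _ _ => //.
Qed.

Lemma Rel_exp0 n g s e : @Rel n g s (fun _ => false) ->
  Rel (g ^+ e) (s ^+ e) (fun _ => false).
Proof.
move=> H; elim: e => [|e IH]; first by rewrite !expg0; exact: Rel1.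
rewrite !expgSr; apply: Rel_ext (Rel_mul IH H) _ _ => //.
Qed.

Lemma Rel_sD n i : 1 <= i < n -> Rel (sD n i) (sS n i) (fun _ => false).
Proof.
case: n => [|n]; first by move=> /andP[_]; rewrite ltn0.
move=> /andP[h1 h2] x b; rewrite /sD /sS permM !tpE addbF.
have e1 : nat_of_ord (inord i.-1 : 'I_n.+1) = i.-1 by rewrite inordK //; lia.
have e2 : nat_of_ord (inord i : 'I_n.+1) = i by rewrite inordK.
have ne : (inord i.-1 : 'I_n.+1) != inord i by rewrite -(inj_eq val_inj) /= e1 e2; lia.
have ne' : (inord i : 'I_n.+1) != inord i.-1 by rewrite eq_sym.
case: b; (case: (eqVneq x (inord i.-1)) => [->|a]; [| case: (eqVneq x (inord i)) => [->|c]]);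
  rewrite !xpair_eqE /= ?eqxx ?andbT ?andbF ?(negbTE ne) ?(negbTE ne') /=;
  rewrite ?xpair_eqE /= ?eqxx ?andbT ?andbF ?(negbTE ne) ?(negbTE ne') ?(negbTE a) ?(negbTE c) //=.
all: by rewrite !xpair_eqE !andbF.
Qed.

Lemma Rel_s1' n : 2 <= n ->
  Rel (s1'D n) (sS n 1) (fun x => (x == 0%N :> nat) || (x == 1%N :> nat)).
Proof.
case: n => [|n] // hn x b; rewrite /s1'D /sS permM !tpE.
have e1 : nat_of_ord (inord 0 : 'I_n.+1) = 0%N by rewrite inordK.
have e2 : nat_of_ord (inord 1 : 'I_n.+1) = 1%N by rewrite inordK.
have ne : (inord 0 : 'I_n.+1) != inord 1 by rewrite -(inj_eq val_inj) /= e1 e2.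
have ne' : (inord 1 : 'I_n.+1) != inord 0 by rewrite eq_sym.
have E0 : (x == 0%N :> nat) = (x == inord 0) by rewrite -(inj_eq val_inj) /= e1.
have E1 : (x == 1%N :> nat) = (x == inord 1) by rewrite -(inj_eq val_inj) /= e2.
rewrite E0 E1.
case: b; (case: (eqVneq x (inord 0)) => [->|a]; [| case: (eqVneq x (inord 1)) => [->|c]]);
  rewrite !xpair_eqE /= ?eqxx ?andbT ?andbF ?(negbTE ne) ?(negbTE ne') /=;
  rewrite ?xpair_eqE /= ?eqxx ?andbT ?andbF ?(negbTE ne) ?(negbTE ne') ?(negbTE a) ?(negbTE c) //=.
all: by rewrite !xpair_eqE ?(negbTE a) ?(negbTE c) ?andbF ?andbT.
Qed.

Definition cS n (s : {perm 'I_n}) (x : 'I_n) := (x == 0%N :> nat) (+) (s x == 0%N :> nat).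

Lemma Sparab_Rel n g : 2 <= n -> g \in Sparab n -> exists s, Rel g s (cS s).
Proof.
move=> hn /gen_prodgP [k [c Hc ->]].
apply: (big_ind (fun g => exists s, Rel g s (cS s))).
- by exists 1 => x b; rewrite !perm1 /cS perm1 addbb addbF.
- move=> g1 g2 [s1 H1] [s2 H2]; exists (s1 * s2).
  apply: Rel_ext (Rel_mul H1 H2) _ _ => // x.
  by rewrite /cS permM addbA -(addbA (x == 0%N :> nat)) addbb addbF.
move=> i _; have := Hc i; rewrite !inE => /orP [/eqP -> | /imsetP [j]].
  exists (sS n 1); apply: Rel_ext (Rel_s1' hn) _ _ => // x.
  rewrite /cS sS_val; last lia.
  by have := ltn_ord x; repeat case: ifP; lia.
rewrite inE => hj ->; exists (sS n j).
apply: Rel_ext (Rel_sD _) _ _ => //; first by have := ltn_ord j; lia.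
move=> x; rewrite /cS sS_val; last by have := ltn_ord j; lia.
by have := ltn_ord x; repeat case: ifP; lia.
Qed.

Lemma Rel_Phi n g s c : @Rel n g s c -> PhiD g = s.
Proof.
move=> H; rewrite /PhiD.
have -> : [ffun x => (g (x, false)).1] = val s.
  by apply/ffunP => x; rewrite ffunE H /= pvalE.
by apply/permP => x; rewrite -pvalE insubdK ?pvalE //; apply: (valP s).
Qed.

Lemma rho_val n m (x : 'I_n) : m < n ->
  ((\prod_(0 <= j < m) sS n (m - j))%g x : nat) =
  if x < m then x.+1 else if x == m :> nat then 0 else x.
Proof.
elim: m x => [|m IH] x hm; first by rewrite big_geq // perm1; repeat case: ifP; lia.
rewrite big_nat_recl // permM subn0.
under eq_bigr do rewrite subSS.
rewrite IH; last lia.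
rewrite sS_val; last lia.
by repeat case: ifP; lia.
Qed.

Lemma Rel_prod0s n (I : eqType) (r : seq I) F1 F2 :
  (forall i, i \in r -> @Rel n (F1 i) (F2 i) (fun _ => false)) ->
  Rel (\prod_(i <- r) F1 i) (\prod_(i <- r) F2 i) (fun _ => false).
Proof.
move=> H; rewrite big_seq [X in Rel _ X _]big_seq; apply: Rel_prod0 => i; exact: H.
Qed.

Lemma Rel_wD n m : 2 <= n -> 1 <= m < n ->
  Rel (wD n m) 1 (fun x => (x == 0%N :> nat) || (x == m :> nat)).
Proof.
move=> hn hm.
have HA : Rel (\prod_(0 <= j < m) sD n (m - j)) (\prod_(0 <= j < m) sS n (m - j))
  (fun _ => false).
  by apply: Rel_prod0s => j; rewrite mem_iota => hj; apply: Rel_sD; lia.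
have HB : Rel (\prod_(2 <= j < m.+1) sD n j) (\prod_(2 <= j < m.+1) sS n j)
  (fun _ => false).
  by apply: Rel_prod0s => j; rewrite mem_iota => hj; apply: Rel_sD; lia.
apply: Rel_ext (Rel_mul (Rel_mul HA (Rel_s1' hn)) HB) _ _.
  apply/permP => x; apply/val_inj; rewrite !permM perm1 /=.
  rewrite prod_sS; [|lia|lia]; rewrite sS_val; last lia.
  rewrite rho_val; last lia.
  by have := ltn_ord x; ifs; lia.
move=> x /=; rewrite rho_val; last lia.
by have := ltn_ord x; ifs; lia.
Qed.

Lemma G n (e : nat -> nat) a b (x : 'I_n) : 2 <= a -> b <= n.+1 -> x < a ->
  (\sum_(a <= k < b) e k <= x)%N ->
  ((\prod_(a <= k < b) tS n k ^+ e k)%g x : nat) = x - \sum_(a <= k < b) e k.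
Proof.
move=> ha; elim: b => [|b IH] hb hx hs.
  by rewrite !big_geq // perm1 subn0.
case: (leqP a b) => hab; last first.
  by rewrite !big_geq // perm1 subn0.
move: hs; rewrite big_nat_recr //= big_nat_recr //= permM => hs.
rewrite tS_shift; rewrite ?IH; lia.
Qed.

Lemma sum_split (e : nat -> nat) n k1 : 2 <= k1 <= n -> (forall k, 2 <= k < k1 -> e k = 0) ->
  (\sum_(2 <= k < n.+1) e k = e k1 + \sum_(k1.+1 <= k < n.+1) e k)%N.
Proof.
move=> /andP[h1 h2] hz; rewrite (big_cat_nat _ (n := k1)) //; last lia.
rewrite big1_seq /=; last first.
  by move=> k; rewrite mem_iota => hk; apply: hz; lia.
by rewrite add0n big_ltn //; lia.
Qed.

Lemma prod_split n (e : nat -> nat) k1 : 2 <= k1 <= n -> (forall k, 2 <= k < k1 -> e k = 0) ->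
  (\prod_(2 <= k < n.+1) tS n k ^+ e k =
   tS n k1 ^+ e k1 * \prod_(k1.+1 <= k < n.+1) tS n k ^+ e k)%g.
Proof.
move=> /andP[h1 h2] hz; rewrite (big_cat_nat _ (n := k1)) //; last lia.
rewrite big1_seq /=; last first.
  by move=> k; rewrite mem_iota => hk; rewrite hz ?expg0 //; lia.
by rewrite mul1g big_ltn //; lia.
Qed.

Theorem mainTheorem9 (n : nat) (hn : 2 <= n) (pi : {perm ('I_n * bool)})
  (e : nat -> nat) (k1 : nat) :
  pi \in Sparab n ->
  (forall k, 2 <= k <= n -> e k < k) ->
  PhiD pi = \prod_(2 <= k < n.+1) tS n k ^+ e k ->
  2 <= k1 <= n -> e k1 != 0 -> (forall k, 2 <= k < k1 -> e k = 0) ->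
  (\sum_(2 <= k < n.+1) e k <= k1)%N ->
  ((\sum_(2 <= k < n.+1) e k)%N = k1 ->
      pi = \prod_(2 <= k < n.+1) tD n k ^+ e k) /\
  ((\sum_(2 <= k < n.+1) e k < k1)%N ->
      pi = wD n (\sum_(2 <= k < n.+1) e k) * \prod_(2 <= k < n.+1) tD n k ^+ e k).
Proof.
move=> Hpi He HPhi hk1 he1 hz hsum.
set m := (\sum_(2 <= k < n.+1) e k)%N in hsum *.
set sig := (\prod_(2 <= k < n.+1) tS n k ^+ e k) in HPhi.
set C := (\prod_(2 <= k < n.+1) tD n k ^+ e k).
have HC : Rel C sig (fun _ => false).
  apply: Rel_prod0s => k; rewrite mem_iota => hk; apply: Rel_exp0.
  by apply: Rel_prod0s => i; rewrite mem_iota => hi; apply: Rel_sD; lia.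
have [s0 Hs0] := Sparab_Rel hn Hpi.
have Es : s0 = sig by rewrite -(Rel_Phi Hs0) HPhi.
rewrite Es in Hs0.
have Em : m = (e k1 + \sum_(k1.+1 <= k < n.+1) e k)%N by rewrite /m (sum_split hk1 hz).
have Hsig : sig = (tS n k1 ^+ e k1 * \prod_(k1.+1 <= k < n.+1) tS n k ^+ e k)%g.
  by rewrite /sig (prod_split hk1 hz).
have he1' : 0 < e k1 by rewrite lt0n.
have S0 : forall x : 'I_n, (x : nat) = 0%N -> (sig x : nat) = k1 - m.
  move=> x hx; rewrite Hsig permM G; first last.
  - rewrite tS_zero //; lia.
  - rewrite tS_zero //; lia.
  - lia.
  - lia.
  by rewrite tS_zero //; lia.
have Sm : m < k1 -> forall x : 'I_n, (x : nat) = m -> (sig x : nat) = 0%N.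
  move=> hm x hx; rewrite Hsig permM G; first last.
  - rewrite tS_shift; lia.
  - rewrite tS_shift; lia.
  - lia.
  - lia.
  by rewrite tS_shift; lia.
have x0n : 0 < n by lia.
set x0 := Ordinal x0n.
split.
  move=> hm; apply/permP => -[x b]; rewrite Hs0 HC; congr pair; rewrite /cS.
  case: (eqVneq (x : nat) 0%N) => hx.
    by rewrite S0 // hm subnn.
  case: (eqVneq (sig x : nat) 0%N) => hsx; last by [].
  have : sig x = sig x0 by apply/val_inj; rewrite /= hsx S0 // hm subnn.
  by move/perm_inj => hxx; move: hx; rewrite hxx.
move=> hm.
have xmn : m < n by lia.
set xm := Ordinal xmn.
have hm1 : (0 < m)%N by lia.
have HW := Rel_mul (Rel_wD hn (m := m) _) HC.
apply/permP => -[x b]; rewrite Hs0 HW; last lia.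
rewrite mul1g; congr pair; congr addb; rewrite /cS addbF.
case: (eqVneq (x : nat) 0%N) => hx.
  by rewrite (S0 x hx); case: eqP => //=; lia.
case: (eqVneq (x : nat) m) => hxm.
  by rewrite (Sm hm x hxm).
case: (eqVneq (sig x : nat) 0%N) => hsx; last by [].
have : sig x = sig xm by apply/val_inj; rewrite /= hsx (Sm hm xm).
by move/perm_inj => hxx; move: hxm; rewrite hxx /= eqxx.
Qed.
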